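(* Let $\sigma>0$ and let $X$ be lognormal$(0,\sigma^2)$, i.e. $X=e^{Y}$ with $Y\sim\mathrm{N}(0,\sigma^2)$, with density $f(x)=\frac{1}{x\sigma\sqrt{2\pi}}e^{-(\log x)^2/(2\sigma^2)}$, $x>0$. For $\theta>0$ let $\mathcal{L}(\theta)=\mathbb{E}[e^{-\theta X}]$, $\kappa(\theta)=\log\mathcal{L}(\theta)$, and let $F_\theta$ be the probability distribution on $(0,\infty)$ with density $f_\theta(x)=e^{-\theta x-\kappa(\theta)}f(x)$; write $\mathbb{E}_\theta$ and $\mathrm{Var}_\theta$ for the expectation and variance of $X$ when $X\sim F_\theta$. Define $$\mu_\theta=-\mathcal{W}(\theta\sigma^2),\qquad \sigma_\theta^2=\frac{\sigma^2}{1+\mathcal{W}(\theta\sigma^2)},$$ where $\mathcal{W}$ is the Lambert W function. Then $$\lim_{\theta\to\infty}\frac{\mathbb{E}_\theta[X]}{\exp\{\mu_\theta+\sigma_\theta^2/2\}}=1,\qquad \lim_{\theta\to\infty}\frac{\mathrm{Var}_\theta[X]}{\exp\{2\mu_\theta+\sigma_\theta^2\}\,\bigl(e^{\sigma_\theta^2}-1\bigr)}=1.$$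
   Context: The Lambert W function $\mathcal{W}(a)$ for $a>0$ is the unique (positive) solution $w$ of $we^{w}=a$. $F_\theta$ is the exponentially tilted (Esscher transformed) lognormal distribution. *)

(* Defs.v *)
From Stdlib Require Import Reals ClassicalEpsilon.
From Coquelicot Require Import Coquelicot.
Open Scope R_scope.

Definition LambertW (a : R) : R :=
  epsilon (inhabits 0) (fun w => 0 < w /\ w * exp w = a).

Definition lognormal_pdf (sigma x : R) : R :=
  / (x * sigma * sqrt (2 * PI)) * exp (- (ln x) ^ 2 / (2 * sigma ^ 2)).

Definition int0inf (g : R -> R) : R :=
  RInt_gen g (at_right 0) (Rbar_locally p_infty).

Definition laplace (sigma theta : R) : R :=
  int0inf (fun x => exp (- theta * x) * lognormal_pdf sigma x).
Definition kappa (sigma theta : R) : R := ln (laplace sigma theta).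

Definition tilted_pdf (sigma theta x : R) : R :=
  exp (- theta * x - kappa sigma theta) * lognormal_pdf sigma x.

Definition tilted_mean (sigma theta : R) : R :=
  int0inf (fun x => x * tilted_pdf sigma theta x).
Definition tilted_var (sigma theta : R) : R :=
  int0inf (fun x => (x - tilted_mean sigma theta) ^ 2 * tilted_pdf sigma theta x).

Definition mu_theta (sigma theta : R) : R := - LambertW (theta * sigma ^ 2).
Definition sigma2_theta (sigma theta : R) : R :=
  sigma ^ 2 / (1 + LambertW (theta * sigma ^ 2)).

(* Main.v *)
Require Import Defs.
From Stdlib Require Import Reals Lra Psatz ClassicalEpsilon.
From Coquelicot Require Import Coquelicot.
Open Scope R_scope.

Lemma cont_of_der (f:R->R) x : ex_derive f x -> continuity_pt f x.
Proof. intro H. apply continuity_pt_filterlim. apply (ex_derive_continuous f x H). Qed.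

Lemma exp_f2_sign x : 0 <= x * (exp x - 1 - x - x^2/2).
Proof.
  destruct (MVT_gen (fun y => exp y - 1 - y - y^2/2) 0 x (fun y => exp y - 1 - y)) as [c [Hc E]].
  - intros y _. auto_derive; auto. field.
  - intros y _. apply cont_of_der. auto_derive; auto.
  - simpl in E. rewrite exp_0 in E.
    assert (H1 := exp_ineq1_le c).
    unfold Rmin, Rmax in Hc. destruct (Rle_dec 0 x).
    + assert (0 <= (exp c - 1 - c) * x) by (apply Rmult_le_pos; lra). nra.
    + assert (0 <= (exp c - 1 - c) * (-x)) by (apply Rmult_le_pos; lra). nra.
Qed.

Lemma exp_taylor3 x : 1 + x + x^2/2 + x^3/6 <= exp x.
Proof.
  destruct (MVT_gen (fun y => exp y - 1 - y - y^2/2 - y^3/6) 0 x (fun y => exp y - 1 - y - y^2/2)) as [c [Hc E]].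
  - intros y _. auto_derive; auto. field.
  - intros y _. apply cont_of_der. auto_derive; auto.
  - simpl in E. rewrite exp_0 in E.
    assert (H1 := exp_f2_sign c).
    unfold Rmin, Rmax in Hc. destruct (Rle_dec 0 x).
    + destruct (Req_dec c 0).
      * subst. rewrite exp_0 in E. nra.
      * assert (0 <= exp c - 1 - c - c^2/2).
        { destruct (Rle_lt_dec (exp c - 1 - c - c^2/2) 0); [|lra].
          assert (0 < c) by lra. nra. }
        nra.
    + destruct (Req_dec c 0).
      * subst. rewrite exp_0 in E. nra.
      * assert (exp c - 1 - c - c^2/2 <= 0).
        { destruct (Rle_lt_dec (exp c - 1 - c - c^2/2) 0); [lra|].
          assert (c < 0) by lra. nra. }
        nra.
Qed.

Lemma E_low u : -2 <= u -> u^2/6 <= exp u - 1 - u.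
Proof. intros H. assert (T:= exp_taylor3 u). nra. Qed.

Lemma E_lin u : u <= -2 -> -u/2 <= exp u - 1 - u.
Proof. intros H. assert (T:= exp_pos u). lra. Qed.

Lemma E_up u : -1 <= u <= 1 -> exp u - 1 - u <= 2*u^2.
Proof.
  intros H. assert (T:= exp_taylor3 (-u)).
  assert (P := exp_pos u). assert (Hm : exp u * exp (-u) = 1).
  { rewrite <- exp_plus. replace (u + - u) with 0 by ring. apply exp_0. }
  destruct (Rle_dec 0 u).
  - assert (exp (-u) >= 1 - u + u^2/3) by nra.
    assert (1 - u + u^2/3 > 0) by nra.
    assert (exp u * (1 - u + u^2/3) <= 1) by nra.
    assert ((1 + u + 2*u^2) * (1 - u + u^2/3) >= 1) by nra.
    nra.
  - assert (exp (-u) >= 1 - u + u^2/2) by nra.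
    assert (exp u * (1 - u + u^2/2) <= 1) by nra.
    assert ((1 + u + 2*u^2) * (1 - u + u^2/2) >= 1) by nra.
    nra.
Qed.

Lemma le_exp x : x <= exp x.
Proof. assert (T := exp_ineq1_le x). lra. Qed.

Notation Fm := (Rbar_locally m_infty).
Notation Fp := (Rbar_locally p_infty).

Lemma normR (x : R) : norm x = Rabs x.
Proof. reflexivity. Qed.

Lemma ballR (x e y : R) : ball x e y <-> Rabs (y - x) < e.
Proof. reflexivity. Qed.

Lemma contR (f : R -> R) x : ex_derive f x -> continuous f x.
Proof. intros H. exact (@ex_derive_continuous R_AbsRing R_NormedModule f x H). Qed.

Lemma is_RInt_gen_of_lim (f : R -> R) Fa Fb {FFa : Filter Fa} {FFb : Filter Fb} l :
  filter_prod Fa Fb (fun ab => ex_RInt f (fst ab) (snd ab)) ->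
  filterlim (fun ab => RInt f (fst ab) (snd ab)) (filter_prod Fa Fb) (locally l) ->
  is_RInt_gen f Fa Fb l.
Proof.
  intros He Hl P HP. unfold filtermapi.
  specialize (Hl P HP). unfold filtermap in Hl.
  generalize (filter_and _ _ He Hl). apply filter_imp.
  intros ab [H1 H2]. exists (RInt f (fst ab) (snd ab)). split; auto.
  exact (@RInt_correct R_CompleteNormedModule f _ _ H1).
Qed.

Lemma tail_p (f : R -> R) K N x y : (forall z, continuous f z) ->
  (forall z, Rabs (f z) <= K * exp (- Rabs z)) -> 0 <= N -> N <= x -> N <= y ->
  Rabs (RInt f x y) <= K * exp (- N).
Proof.
  intros Hc Hb HN.
  assert (Hx : forall x y, N <= x -> x <= y -> Rabs (RInt f x y) <= K * exp (- N)).
  { clear x y. intros x y Hx Hxy.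
    assert (Hg : is_RInt (fun v => K * exp (- v)) x y (K * exp (-x) - K * exp (-y))).
    { assert (E: K * exp (-x) - K * exp (-y) = minus ((fun v => - K * exp (-v)) y) ((fun v => - K * exp (-v)) x)).
      { unfold minus, plus, opp; simpl. ring. }
      rewrite E. apply (is_RInt_derive (fun v => - K * exp (-v))).
      - intros z _. auto_derive; auto. ring.
      - intros z _. apply contR. auto_derive; auto. }
    rewrite <- normR.
    eapply Rle_trans.
    apply (norm_RInt_le f (fun v => K * exp (- v)) x y _ _ Hxy); [|apply (@RInt_correct R_CompleteNormedModule); apply (@ex_RInt_continuous R_CompleteNormedModule); auto|exact Hg].
    intros z Hz. rewrite normR. rewrite <- (Rabs_right z) at 2 by lra. apply Hb.
    assert (0 < exp (-y)) by apply exp_pos.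
    assert (K >= 0). { assert (T := Hb 0). assert (0 <= Rabs (f 0)) by apply Rabs_pos.
      assert (0 < exp (- Rabs 0)) by apply exp_pos. nra. }
    assert (exp (-x) <= exp (-N)). { apply exp_le_3 || (destruct (Req_dec x N); [subst; lra| left; apply exp_increasing; lra]). }
    nra. }
  intros Hx' Hy'. destruct (Rle_dec x y).
  - apply Hx; auto.
  - rewrite <- opp_RInt_swap by (apply (@ex_RInt_continuous R_CompleteNormedModule); auto).
    change (Rabs (- RInt f y x) <= K * exp (- N)). rewrite Rabs_Ropp. apply Hx; lra.
Qed.

Lemma Kpos (f : R -> R) K : (forall z, Rabs (f z) <= K * exp (- Rabs z)) -> 0 <= K.
Proof. intros Hb. assert (T := Hb 0). assert (0 <= Rabs (f 0)) by apply Rabs_pos.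
  assert (0 < exp (- Rabs 0)) by apply exp_pos. nra. Qed.

Lemma tail_m (f : R -> R) K N x y : (forall z, continuous f z) ->
  (forall z, Rabs (f z) <= K * exp (- Rabs z)) -> 0 <= N -> x <= -N -> y <= -N ->
  Rabs (RInt f x y) <= K * exp (- N).
Proof.
  intros Hc Hb HN. assert (HK := Kpos f K Hb).
  assert (Hx : forall x y, x <= y -> y <= -N -> Rabs (RInt f x y) <= K * exp (- N)).
  { clear x y. intros x y Hxy Hy.
    assert (Hg : is_RInt (fun v => K * exp v) x y (K * exp y - K * exp x)).
    { assert (E: K * exp y - K * exp x = minus ((fun v => K * exp v) y) ((fun v => K * exp v) x)).
      { unfold minus, plus, opp; simpl. ring. }
      rewrite E. apply (is_RInt_derive (fun v => K * exp v)).
      - intros z _. auto_derive; auto. ring.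
      - intros z _. apply contR. auto_derive; auto. }
    rewrite <- normR.
    eapply Rle_trans.
    apply (norm_RInt_le f (fun v => K * exp v) x y _ _ Hxy); [|apply (@RInt_correct R_CompleteNormedModule); apply (@ex_RInt_continuous R_CompleteNormedModule); auto|exact Hg].
    intros z Hz. rewrite normR. replace z with (- Rabs z) at 2 by (rewrite Rabs_left1 by lra; ring). apply Hb.
    assert (0 < exp x) by apply exp_pos.
    assert (exp y <= exp (-N)). { destruct (Req_dec y (-N)); [subst; lra| left; apply exp_increasing; lra]. }
    nra. }
  intros Hx' Hy'. destruct (Rle_dec x y).
  - apply Hx; auto.
  - rewrite <- opp_RInt_swap by (apply (@ex_RInt_continuous R_CompleteNormedModule); auto).
    change (Rabs (- RInt f y x) <= K * exp (- N)). rewrite Rabs_Ropp. apply Hx; lra.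
Qed.

Lemma L_ex (f : R -> R) K : (forall z, continuous f z) ->
  (forall z, Rabs (f z) <= K * exp (- Rabs z)) -> ex_RInt_gen f Fm Fp.
Proof.
  intros Hc Hb. assert (HK := Kpos f K Hb).
  assert (Hex : forall a b, ex_RInt f a b) by (intros; apply (@ex_RInt_continuous R_CompleteNormedModule); auto).
  destruct (proj1 (@filterlim_locally_cauchy (R*R) R_CompleteSpace (filter_prod Fm Fp) _
            (fun ab => RInt f (fst ab) (snd ab)))) as [l Hl].
  - intros eps.
    set (N := Rmax 0 (- ln (eps / (2*K+2)))).
    assert (HN0 : 0 <= N) by apply Rmax_l.
    assert (HeN : exp (-N) <= eps / (2*K+2)).
    { assert (0 < eps / (2*K+2)) by (apply Rdiv_lt_0_compat; [apply cond_pos|lra]).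
      rewrite <- (exp_ln (eps/(2*K+2))) by auto.
      assert (- N <= ln (eps / (2*K+2))) by (assert (T := Rmax_r 0 (- ln (eps / (2*K+2)))); unfold N; lra).
      destruct (Req_dec (-N) (ln (eps / (2*K+2)))) as [E|E]; [rewrite E; lra|left; apply exp_increasing; lra]. }
    exists (fun ab => fst ab < -N /\ N < snd ab). split.
    + apply (Filter_prod _ _ _ (fun a => a < -N) (fun b => N < b)).
      * exists (-N). auto.
      * exists N. auto.
      * intros x y Hx Hy. simpl. auto.
    + intros [a b] [a' b'] [Ha Hb'] [Ha' Hb'']. simpl in *. apply ballR.
      assert (E : RInt f a' b' - RInt f a b = RInt f a' a + RInt f b b').
      { rewrite <- (RInt_Chasles f a' a b') by auto.
        rewrite <- (RInt_Chasles f a b b') by auto. unfold plus; simpl. ring. }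
      rewrite E. eapply Rle_lt_trans. apply Rabs_triang.
      assert (T1 := tail_m f K N a' a Hc Hb HN0 ltac:(lra) ltac:(lra)).
      assert (T2 := tail_p f K N b b' Hc Hb HN0 ltac:(lra) ltac:(lra)).
      assert (K * exp (-N) <= K * (eps / (2*K+2))) by (apply Rmult_le_compat_l; auto).
      assert (K * (eps / (2*K+2)) < eps / 2).
      { assert (0 < eps) by apply cond_pos. unfold Rdiv.
        apply Rmult_lt_reg_r with (2*K+2); [lra|].
        field_simplify; [|lra]. nra. }
      lra.
  - exists l. apply is_RInt_gen_of_lim; try typeclasses eauto; auto.
    apply (Filter_prod _ _ _ (fun _ => True) (fun _ => True)); [exists 0; auto | exists 0; auto | intros; apply Hex].
Qed.

Definition C0 : R := RInt_gen (fun x => exp (- Rabs x)) Fm Fp.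

Lemma cont_expabs z : continuous (fun x => exp (- Rabs x)) z.
Proof.
  apply (continuous_comp (fun x => Rabs x) (fun u => exp (-u))); [apply continuous_Rabs | apply contR; auto_derive; auto].
Qed.

Lemma ex_expabs : ex_RInt_gen (fun x => exp (- Rabs x)) Fm Fp.
Proof. apply (L_ex _ 1). apply cont_expabs. intros z. rewrite Rabs_right by (left; apply exp_pos). lra. Qed.

Lemma prod_le : filter_prod Fm Fp (fun ab : R * R => fst ab <= snd ab).
Proof.
  apply (Filter_prod _ _ _ (fun a => a < 0) (fun b => 0 < b)); [exists 0; auto | exists 0; auto | intros; simpl; lra].
Qed.

Lemma L_bound (f : R -> R) K : (forall z, continuous f z) ->
  (forall z, Rabs (f z) <= K * exp (- Rabs z)) -> Rabs (RInt_gen f Fm Fp) <= K * C0.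
Proof.
  intros Hc Hb. rewrite <- normR.
  apply (RInt_gen_norm f (fun z => K * exp (- Rabs z))).
  - apply prod_le.
  - apply (Filter_prod _ _ _ (fun _ => True) (fun _ => True)); [exists 0; auto | exists 0; auto | intros; simpl].
    rewrite normR. apply Hb.
  - apply (@RInt_gen_correct R_CompleteNormedModule); try typeclasses eauto. apply (L_ex f K Hc Hb).
  - apply (is_RInt_gen_scal (fun x => exp (- Rabs x)) K C0).
    unfold C0. apply (@RInt_gen_correct R_CompleteNormedModule); try typeclasses eauto. apply ex_expabs.
Qed.

Lemma L_lower (f : R -> R) : (forall z, continuous f z) -> (forall z, 0 <= f z) ->
  ex_RInt_gen f Fm Fp -> RInt f (-1) 1 <= RInt_gen f Fm Fp.
Proof.
  intros Hc Hp He. assert (H := @RInt_gen_correct R_CompleteNormedModule _ _ _ _ f He). set (l := RInt_gen f Fm Fp) in *.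
  assert (Hex : forall a b, ex_RInt f a b) by (intros; apply (@ex_RInt_continuous R_CompleteNormedModule); auto).
  set (c := RInt f (-1) 1).
  destruct (Rle_lt_dec c l) as [|Hlt]; auto. exfalso.
  assert (Hpos : 0 < c - l) by lra.
  destruct (H (ball l (mkposreal _ Hpos))) as [Q R HQ HR Himp].
  { exists (mkposreal _ Hpos). auto. }
  destruct HQ as [M1 HM1]. destruct HR as [M2 HM2].
  set (a := Rmin M1 (-1) - 1). set (b := Rmax M2 1 + 1).
  assert (a < M1 /\ a <= -1) by (unfold a; split; [assert (T:=Rmin_l M1 (-1)); lra| assert (T:=Rmin_r M1 (-1)); lra]).
  assert (M2 < b /\ 1 <= b) by (unfold b; split; [assert (T:=Rmax_l M2 1); lra| assert (T:=Rmax_r M2 1); lra]).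
  destruct (Himp a b (HM1 a ltac:(lra)) (HM2 b ltac:(lra))) as [y [Hy Hb]].
  simpl in Hy, Hb. apply ballR in Hb. simpl in Hb.
  apply is_RInt_unique in Hy.
  assert (E : RInt f a b = RInt f a (-1) + c + RInt f 1 b).
  { unfold c. rewrite <- (RInt_Chasles f a (-1) b) by auto. rewrite <- (RInt_Chasles f (-1) 1 b) by auto.
    unfold plus; simpl. ring. }
  assert (0 <= RInt f a (-1)) by (apply RInt_ge_0; auto; lra).
  assert (0 <= RInt f 1 b) by (apply RInt_ge_0; auto; lra).
  assert (T := Rle_abs (y - l)). change (Rabs (y - l) < c - l) in Hb. lra.
Qed.

Lemma L_subst (F : R -> R) (al be : R) l : 0 < al ->
  (forall x, 0 < x -> continuous F x) ->
  is_RInt_gen (fun v => al * exp (al * v + be) * F (exp (al * v + be))) Fm Fp l ->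
  is_RInt_gen F (at_right 0) Fp l.
Proof.
  intros Hal Hc H P HP.
  destruct (H P HP) as [Q R HQ HR Himp]. destruct HQ as [M1 HM1]. destruct HR as [M2 HM2].
  set (psi := fun x => (ln x - be) / al).
  assert (Hg : forall x, 0 < x -> exp (al * psi x + be) = x).
  { intros x Hx. unfold psi. replace (al * ((ln x - be) / al) + be) with (ln x) by (field; lra). apply exp_ln; auto. }
  apply (Filter_prod _ _ _ (fun a => 0 < a /\ a < exp (al * M1 + be)) (fun b => exp (al * M2 + be) < b)).
  - exists (mkposreal _ (exp_pos (al * M1 + be))). intros y Hy Hy0. simpl in Hy.
    change (Rabs (y - 0) < exp (al * M1 + be)) in Hy. rewrite Rminus_0_r, Rabs_right in Hy by lra. auto.
  - exists (exp (al * M2 + be)). auto.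
  - intros a b [Ha0 Ha] Hb. simpl.
    assert (Hb0 : 0 < b) by (assert (T := exp_pos (al * M2 + be)); lra).
    assert (Qa : Q (psi a)).
    { apply HM1. unfold psi. apply Rmult_lt_reg_r with al; auto. unfold Rdiv. rewrite Rmult_assoc, Rinv_l by lra.
      assert (ln a < al * M1 + be) by (rewrite <- (ln_exp (al * M1 + be)); apply ln_increasing; auto).
      lra. }
    assert (Rb : R (psi b)).
    { apply HM2. unfold psi. apply Rmult_lt_reg_r with al; auto. unfold Rdiv. rewrite Rmult_assoc, Rinv_l by lra.
      assert (ln (exp (al * M2 + be)) < ln b) by (apply ln_increasing; auto; apply exp_pos).
      rewrite ln_exp in H0. lra. }
    destruct (Himp _ _ Qa Rb) as [y [Hy Py]]. simpl in Hy.
    exists y. split; auto.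
    assert (Hcomp := is_RInt_comp F (fun v => exp (al * v + be)) (fun v => al * exp (al * v + be)) (psi a) (psi b)).
    cbv beta in Hcomp. rewrite !Hg in Hcomp by auto.
    assert (Hex : ex_RInt F a b).
    { apply (@ex_RInt_continuous R_CompleteNormedModule). intros z Hz. apply Hc.
      assert (0 < Rmin a b) by (apply Rmin_glb_lt; auto). lra. }
    assert (E : y = RInt F a b).
    { apply (@is_RInt_unique R_CompleteNormedModule) in Hy. rewrite <- Hy. apply (@is_RInt_unique R_CompleteNormedModule).
      assert (Hc2 : is_RInt (fun y => scal (al * exp (al * y + be)) (F (exp (al * y + be)))) (psi a) (psi b) (RInt F a b)).
      { apply Hcomp.
        - intros x _. apply Hc. apply exp_pos.
        - intros x _. split.
          + auto_derive; auto. ring.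
          + apply contR. auto_derive; auto. }
      exact Hc2. }
    rewrite E. apply (@RInt_correct R_CompleteNormedModule). auto.
Qed.

Definition ep t := / sqrt t.
Definition phi t v := (t - 1) * (exp (ep t * v) - 1 - ep t * v) + (ep t * v)^2 / 2.
Definition Gf s t v := exp (- phi t v / s^2).
Definition T0 s := 2 + s^2 + (16*s^2)^2.
Definition KK s := exp (27*s^2/2) + 1.

Lemma sqrt_facts t : 1 <= t -> 1 <= sqrt t /\ sqrt t * sqrt t = t /\ ep t * sqrt t = 1.
Proof.
  intros H. split; [|split].
  - rewrite <- sqrt_1. apply sqrt_le_1_alt. lra.
  - apply sqrt_sqrt. lra.
  - unfold ep. apply Rinv_l. assert (0 < sqrt t) by (apply sqrt_lt_R0; lra). lra.
Qed.

Lemma T0_facts s t : 0 < s -> T0 s <= t -> 2 <= t /\ s^2 <= t /\ 16 * s^2 <= sqrt t.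
Proof.
  intros Hs H. unfold T0 in H. assert (0 < s^2) by (apply pow_lt; auto).
  assert (0 <= (16*s^2)^2) by (apply pow2_ge_0).
  split; [lra|split;[lra|]].
  rewrite <- (sqrt_pow2 (16 * s^2)) by lra. apply sqrt_le_1_alt. lra.
Qed.

Lemma Gf_pos s t v : 0 < Gf s t v.
Proof. apply exp_pos. Qed.

Lemma Gf_dom s t v : 0 < s -> T0 s <= t ->
  Gf s t v <= exp (- v^2 / (6 * s^2)) + exp (- 4 * Rabs v).
Proof.
  intros Hs Ht. destruct (T0_facts s t Hs Ht) as [H2 [Hs2 Hsq]].
  destruct (sqrt_facts t ltac:(lra)) as [Hq1 [Hqq He]].
  assert (Hs2p : 0 < s^2) by (apply pow_lt; auto).
  set (q := sqrt t) in *. set (e := ep t) in *.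
  assert (He' : e = / q) by reflexivity.
  assert (Hepos : 0 < e) by (rewrite He'; apply Rinv_0_lt_compat; lra).
  unfold Gf, phi. fold e.
  assert (P1 := exp_pos (- v^2 / (6 * s^2))). assert (P2 := exp_pos (- 4 * Rabs v)).
  destruct (Rle_dec (-2) (e * v)) as [Hu|Hu].
  - assert (Hl := E_low (e * v) Hu).
    assert (Hph : v^2 / 6 <= (t - 1) * (exp (e * v) - 1 - e * v) + (e * v)^2 / 2).
    { assert ((e*v)^2 * t = v^2) by (rewrite <- Hqq; replace ((e*v)^2 * (q*q)) with ((e*q)^2*v^2) by ring; rewrite He; ring).
      assert ((t-1) * ((e*v)^2/6) <= (t - 1) * (exp (e * v) - 1 - e * v)) by (apply Rmult_le_compat_l; lra).
      nra. }
    assert (exp (- ((t - 1) * (exp (e * v) - 1 - e * v) + (e * v) ^ 2 / 2) / s ^ 2) <= exp (- v^2 / (6 * s^2))).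
    { apply exp_le_3 || idtac.
      destruct (Req_dec (- ((t - 1) * (exp (e * v) - 1 - e * v) + (e * v) ^ 2 / 2) / s ^ 2) (- v^2 / (6 * s^2))) as [E|E].
      - rewrite E; lra.
      - left. apply exp_increasing. unfold Rdiv.
        apply Rmult_le_compat_r with (r := / s^2) in Hph; [|left; apply Rinv_0_lt_compat; auto].
        assert (- v ^ 2 * / (6 * s ^ 2) = - (v^2/6 * / s^2)) by (field; lra). lra. }
    lra.
  - assert (Hl := E_lin (e * v) ltac:(lra)).
    assert (Hv : v < 0) by (assert (0 <= e * v -> False) by lra; destruct (Rle_dec 0 v); [nra|lra]).
    rewrite Rabs_left by auto.
    assert (Hph : 4 * s^2 * (- v) <= (t - 1) * (exp (e * v) - 1 - e * v) + (e * v)^2 / 2).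
    { assert ((t-1) * (- (e*v)/2) <= (t - 1) * (exp (e * v) - 1 - e * v)) by (apply Rmult_le_compat_l; lra).
      assert ((t - 1) * e >= q / 2).
      { assert (t * e = q) by (rewrite <- Hqq; replace (q*q*e) with (q*(e*q)) by ring; rewrite He; ring).
        assert (e <= 1) by (rewrite He'; rewrite <- Rinv_1; apply Rinv_le_contravar; lra). nra. }
      assert (0 <= (e*v)^2/2) by (apply Rmult_le_pos; [apply pow2_ge_0|lra]).
      nra. }
    assert (exp (- ((t - 1) * (exp (e * v) - 1 - e * v) + (e * v) ^ 2 / 2) / s ^ 2) <= exp (- 4 * - v)).
    { destruct (Req_dec (- ((t - 1) * (exp (e * v) - 1 - e * v) + (e * v) ^ 2 / 2) / s ^ 2) (- 4 * - v)) as [E|E].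
      - rewrite E; lra.
      - left. apply exp_increasing. unfold Rdiv.
        apply Rmult_le_compat_r with (r := / s^2) in Hph; [|left; apply Rinv_0_lt_compat; auto].
        replace (4 * s ^ 2 * - v * / s ^ 2) with (4 * - v) in Hph by (field; lra). lra. }
    lra.
Qed.

Lemma exp_mono a b : a <= b -> exp a <= exp b.
Proof. intros H. destruct (Req_dec a b) as [E|E]; [rewrite E; lra| left; apply exp_increasing; lra]. Qed.

Lemma master s v : 0 < s ->
  exp (2 * Rabs v) * (exp (- v^2 / (6 * s^2)) + exp (- 4 * Rabs v)) <= KK s * exp (- Rabs v).
Proof.
  intros Hs. unfold KK. set (a := Rabs v).
  assert (Hv2 : v^2 = a^2) by (unfold a; rewrite <- (pow2_abs v); reflexivity).
  assert (Hs2 : 0 < s^2) by (apply pow_lt; auto).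
  rewrite Rmult_plus_distr_l, <- !exp_plus, Rmult_plus_distr_r, <- exp_plus.
  assert (exp (2 * a + - v ^ 2 / (6 * s ^ 2)) <= exp (27 * s ^ 2 / 2 + - a)).
  { apply exp_mono. rewrite Hv2.
    assert (27 * s ^ 2 / 2 + - a - (2 * a + - a ^ 2 / (6 * s ^ 2)) = (a - 9*s^2)^2 / (6*s^2)) by (field; lra).
    assert (0 <= (a - 9*s^2)^2 / (6*s^2)) by (apply Rmult_le_pos; [apply pow2_ge_0|left; apply Rinv_0_lt_compat; lra]).
    lra. }
  assert (exp (2 * a + - 4 * a) <= exp (- a)) by (apply exp_mono; unfold a; assert (T:=Rabs_pos v); lra).
  lra.
Qed.

Lemma Gbig s t v : 0 < s -> T0 s <= t -> exp (2 * Rabs v) * Gf s t v <= KK s * exp (- Rabs v).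
Proof.
  intros Hs Ht. eapply Rle_trans; [|apply (master s v Hs)].
  apply Rmult_le_compat_l; [left; apply exp_pos|]. apply Gf_dom; auto.
Qed.

Lemma Glow s t v : 0 < s -> 1 <= t -> -1 <= v <= 1 -> exp (- 2 / s^2) <= Gf s t v.
Proof.
  intros Hs Ht Hv. destruct (sqrt_facts t Ht) as [Hq1 [Hqq He]].
  assert (Hs2p : 0 < s^2) by (apply pow_lt; auto).
  set (q := sqrt t) in *. set (e := ep t) in *.
  assert (He' : e = / q) by reflexivity.
  assert (Hepos : 0 < e) by (rewrite He'; apply Rinv_0_lt_compat; lra).
  assert (e <= 1) by (rewrite He'; rewrite <- Rinv_1; apply Rinv_le_contravar; lra).
  unfold Gf, phi. fold e. apply exp_mono.
  assert (Hu : -1 <= e * v <= 1) by (split; nra).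
  assert (HE := E_up (e * v) Hu).
  assert ((e*v)^2 * t = v^2) by (rewrite <- Hqq; replace ((e*v)^2 * (q*q)) with ((e*q)^2*v^2) by ring; rewrite He; ring).
  assert (Hph : (t - 1) * (exp (e * v) - 1 - e * v) + (e * v) ^ 2 / 2 <= 2).
  { assert ((t - 1) * (exp (e * v) - 1 - e * v) <= (t-1) * (2 * (e*v)^2)) by (apply Rmult_le_compat_l; lra).
    assert (0 <= (e*v)^2) by apply pow2_ge_0. nra. }
  unfold Rdiv. apply Rmult_le_compat_r with (r := / s^2) in Hph; [|left; apply Rinv_0_lt_compat; auto].
  lra.
Qed.

Lemma gplus f g a b : is_RInt_gen f Fm Fp a -> is_RInt_gen g Fm Fp b ->
  is_RInt_gen (fun x => f x + g x) Fm Fp (a + b).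
Proof. intros. exact (is_RInt_gen_plus f g a b H H0). Qed.
Lemma gminus f g a b : is_RInt_gen f Fm Fp a -> is_RInt_gen g Fm Fp b ->
  is_RInt_gen (fun x => f x - g x) Fm Fp (a - b).
Proof. intros. exact (is_RInt_gen_minus f g a b H H0). Qed.
Lemma gscal f k a : is_RInt_gen f Fm Fp a -> is_RInt_gen (fun x => k * f x) Fm Fp (k * a).
Proof. intros. exact (is_RInt_gen_scal f k a H). Qed.
Lemma gext_any Fa Fb {FFa : Filter Fa} {FFb : Filter Fb} (f g : R -> R) l : (forall x, f x = g x) -> is_RInt_gen f Fa Fb l -> is_RInt_gen g Fa Fb l.
Proof. intros E H. apply (is_RInt_gen_ext f g l); auto.
  apply (Filter_prod _ _ _ (fun _ => True) (fun _ => True)); [apply filter_true|apply filter_true|intros; apply E]. Qed.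
Lemma gext (f g : R -> R) l : (forall x, f x = g x) -> is_RInt_gen f Fm Fp l -> is_RInt_gen g Fm Fp l.
Proof. apply gext_any; typeclasses eauto. Qed.
Lemma guniq (f : R -> R) l1 l2 : is_RInt_gen f Fm Fp l1 -> is_RInt_gen f Fm Fp l2 -> l1 = l2.
Proof. intros H1 H2. apply (@is_RInt_gen_unique R_CompleteNormedModule) in H1; try typeclasses eauto.
  apply (@is_RInt_gen_unique R_CompleteNormedModule) in H2; try typeclasses eauto. congruence. Qed.
Lemma gcorr (f : R -> R) K : (forall z, continuous f z) ->
  (forall z, Rabs (f z) <= K * exp (- Rabs z)) -> is_RInt_gen f Fm Fp (RInt_gen f Fm Fp).
Proof. intros Hc Hb. apply (@RInt_gen_correct R_CompleteNormedModule); try typeclasses eauto. apply (L_ex f K Hc Hb). Qed.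

Lemma L_lim0 (f : R -> R) K : (forall z, Rabs (f z) <= K * exp (- Rabs z)) ->
  filterlim f Fm (locally 0) /\ filterlim f Fp (locally 0).
Proof.
  intros Hb. assert (HK := Kpos f K Hb).
  assert (Key : forall eps : posreal, exists M, 0 <= M /\ K * exp (- M) < eps).
  { intros eps. assert (0 < eps) by apply cond_pos.
    exists (Rmax 0 (ln ((K+1)/eps))). split; [apply Rmax_l|].
    assert (0 < (K+1)/eps) by (apply Rdiv_lt_0_compat; lra).
    assert (exp (- Rmax 0 (ln ((K+1)/eps))) <= eps / (K+1)).
    { assert (T := Rmax_r 0 (ln ((K+1)/eps))).
      assert (exp (- Rmax 0 (ln ((K+1)/eps))) <= exp (- ln ((K+1)/eps))) by (apply exp_mono; lra).
      rewrite (exp_Ropp (ln _)), exp_ln in H1 by auto. replace (eps / (K+1)) with (/ ((K+1)/eps)) by (field; lra). auto. }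
    assert (K * exp (- Rmax 0 (ln ((K + 1) / eps))) <= K * (eps / (K+1))) by (apply Rmult_le_compat_l; auto).
    assert (K * (eps / (K+1)) < eps).
    { apply Rmult_lt_reg_r with (K+1); [lra|]. replace (K * (eps / (K + 1)) * (K + 1)) with (K * eps) by (field; lra). nra. }
    lra. }
  split; intros P [eps HP]; destruct (Key eps) as [M [HM0 HM]].
  - exists (-M). intros x Hx. apply HP. apply ballR. rewrite Rminus_0_r.
    eapply Rle_lt_trans; [apply Hb|]. eapply Rle_lt_trans; [|apply HM].
    apply Rmult_le_compat_l; auto. apply exp_mono. rewrite Rabs_left by lra. lra.
  - exists M. intros x Hx. apply HP. apply ballR. rewrite Rminus_0_r.
    eapply Rle_lt_trans; [apply Hb|]. eapply Rle_lt_trans; [|apply HM].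
    apply Rmult_le_compat_l; auto. apply exp_mono. rewrite Rabs_right by lra. lra.
Qed.

Lemma gderiv (f df : R -> R) : (forall x, is_derive f x (df x)) -> (forall x, continuous df x) ->
  filterlim f Fm (locally 0) -> filterlim f Fp (locally 0) -> is_RInt_gen df Fm Fp 0.
Proof.
  intros Hd Hc Hm Hp.
  assert (E : forall x, Derive f x = df x) by (intros; apply is_derive_unique; auto).
  assert (H := is_RInt_gen_Derive (Fa := Fm) (Fb := Fp) f 0 0).
  replace 0 with (0 - 0) by ring. apply (gext (Derive f)); auto. apply H; auto.
  all: refine (Filter_prod _ _ _ (fun _ => True) (fun _ => True) filter_true filter_true _); intros.
  - eexists; apply Hd.
  - apply (continuous_ext df); [intros; symmetry; auto|auto].
Qed.

Definition f0 s t v := Gf s t v.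
Definition f1 s t v := exp (ep t * v) * Gf s t v.
Definition f2 s t v := exp (2 * (ep t * v)) * Gf s t v.
Definition fM s t v := v * Gf s t v.
Definition fP s t v := v * exp (ep t * v) * Gf s t v.

Definition A0 s t : R := RInt_gen (f0 s t) Fm Fp.
Definition A1 s t : R := RInt_gen (f1 s t) Fm Fp.
Definition A2 s t : R := RInt_gen (f2 s t) Fm Fp.
Definition M1 s t : R := RInt_gen (fM s t) Fm Fp.
Definition PP s t : R := RInt_gen (fP s t) Fm Fp.

Lemma ep_facts t : 1 <= t -> 0 < ep t <= 1.
Proof.
  intros H. destruct (sqrt_facts t H) as [H1 [H2 H3]]. unfold ep.
  split. apply Rinv_0_lt_compat; lra. rewrite <- Rinv_1. apply Rinv_le_contravar; lra.
Qed.

Lemma epv_le t v : 1 <= t -> ep t * v <= Rabs v.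
Proof. intros H. destruct (ep_facts t H). destruct (Rle_dec 0 v).
  rewrite Rabs_right by lra. nra. rewrite Rabs_left by lra. nra. Qed.

Lemma abs_le_exp2 v : Rabs v <= exp (2 * Rabs v).
Proof. assert (T := le_exp (2 * Rabs v)). assert (T2 := Rabs_pos v). lra. Qed.

Section Ints.
Variables s t : R.
Hypothesis Hs : 0 < s.
Hypothesis Ht : T0 s <= t.

Lemma t_ge1 : 1 <= t.
Proof. destruct (T0_facts s t Hs Ht). lra. Qed.

Lemma sq_pos : 0 < sqrt t.
Proof. apply sqrt_lt_R0; assert (T:= t_ge1); lra. Qed.
Lemma s2_pos : 0 < s^2.
Proof. apply pow_lt; auto. Qed.

Ltac side := repeat split; try apply I;
  try (assert (T := sq_pos); lra); try (assert (T := s2_pos); lra).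

Lemma cont_G v : continuous (Gf s t) v.
Proof. apply contR. unfold Gf, phi, ep. auto_derive. side. Qed.
Lemma cont_f0 v : continuous (f0 s t) v.
Proof. apply contR. unfold f0, Gf, phi, ep. auto_derive. side. Qed.
Lemma cont_f1 v : continuous (f1 s t) v.
Proof. apply contR. unfold f1, Gf, phi, ep. auto_derive. side. Qed.
Lemma cont_f2 v : continuous (f2 s t) v.
Proof. apply contR. unfold f2, Gf, phi, ep. auto_derive. side. Qed.
Lemma cont_fM v : continuous (fM s t) v.
Proof. apply contR. unfold fM, Gf, phi, ep. auto_derive. side. Qed.
Lemma cont_fP v : continuous (fP s t) v.
Proof. apply contR. unfold fP, Gf, phi, ep. auto_derive. side. Qed.

Lemma GB v : exp (2 * Rabs v) * Gf s t v <= KK s * exp (- Rabs v).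
Proof. apply Gbig; auto. Qed.

Lemma Gpos v : 0 < Gf s t v.
Proof. apply Gf_pos. Qed.

Lemma bnd_f0 v : Rabs (f0 s t v) <= KK s * exp (- Rabs v).
Proof. eapply Rle_trans; [|apply GB]. unfold f0. rewrite Rabs_right by (left; apply Gpos).
  assert (1 <= exp (2 * Rabs v)) by (rewrite <- exp_0; apply exp_mono; assert (T:=Rabs_pos v); lra).
  assert (T := Gpos v). nra. Qed.
Lemma bnd_f1 v : Rabs (f1 s t v) <= KK s * exp (- Rabs v).
Proof. eapply Rle_trans; [|apply GB]. unfold f1. rewrite Rabs_right by (left; apply Rmult_lt_0_compat; [apply exp_pos|apply Gpos]).
  apply Rmult_le_compat_r; [left; apply Gpos|]. apply exp_mono. assert (T := epv_le t v t_ge1). assert (T2:=Rabs_pos v). lra. Qed.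
Lemma bnd_f2 v : Rabs (f2 s t v) <= KK s * exp (- Rabs v).
Proof. eapply Rle_trans; [|apply GB]. unfold f2. rewrite Rabs_right by (left; apply Rmult_lt_0_compat; [apply exp_pos|apply Gpos]).
  apply Rmult_le_compat_r; [left; apply Gpos|]. apply exp_mono. assert (T := epv_le t v t_ge1). lra. Qed.
Lemma bnd_fM v : Rabs (fM s t v) <= KK s * exp (- Rabs v).
Proof. eapply Rle_trans; [|apply GB]. unfold fM. rewrite Rabs_mult, (Rabs_right (Gf _ _ _)) by (left; apply Gpos).
  apply Rmult_le_compat_r; [left; apply Gpos|]. apply abs_le_exp2. Qed.
Lemma bnd_fP v : Rabs (fP s t v) <= KK s * exp (- Rabs v).
Proof. eapply Rle_trans; [|apply GB]. unfold fP. rewrite !Rabs_mult, (Rabs_right (Gf _ _ _)) by (left; apply Gpos).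
  rewrite (Rabs_right (exp _)) by (left; apply exp_pos).
  apply Rmult_le_compat_r; [left; apply Gpos|].
  replace (2 * Rabs v) with (Rabs v + Rabs v) by ring. rewrite exp_plus.
  apply Rmult_le_compat; [apply Rabs_pos|left; apply exp_pos|apply le_exp|].
  apply exp_mono. apply epv_le, t_ge1. Qed.

Lemma H0 : is_RInt_gen (f0 s t) Fm Fp (A0 s t).
Proof. unfold A0, A1, A2, M1, PP. apply (gcorr _ (KK s)). apply cont_f0. apply bnd_f0. Qed.
Lemma H1 : is_RInt_gen (f1 s t) Fm Fp (A1 s t).
Proof. unfold A0, A1, A2, M1, PP. apply (gcorr _ (KK s)). apply cont_f1. apply bnd_f1. Qed.
Lemma H2 : is_RInt_gen (f2 s t) Fm Fp (A2 s t).
Proof. unfold A0, A1, A2, M1, PP. apply (gcorr _ (KK s)). apply cont_f2. apply bnd_f2. Qed.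
Lemma HM : is_RInt_gen (fM s t) Fm Fp (M1 s t).
Proof. unfold A0, A1, A2, M1, PP. apply (gcorr _ (KK s)). apply cont_fM. apply bnd_fM. Qed.
Lemma HP : is_RInt_gen (fP s t) Fm Fp (PP s t).
Proof. unfold A0, A1, A2, M1, PP. apply (gcorr _ (KK s)). apply cont_fP. apply bnd_fP. Qed.

Lemma M1_bnd : Rabs (M1 s t) <= KK s * C0.
Proof. unfold M1, PP. apply L_bound. apply cont_fM. apply bnd_fM. Qed.
Lemma PP_bnd : Rabs (PP s t) <= KK s * C0.
Proof. unfold M1, PP. apply L_bound. apply cont_fP. apply bnd_fP. Qed.

Lemma A0_low : 2 * exp (- 2 / s^2) <= A0 s t.
Proof.
  unfold A0. eapply Rle_trans; [|apply (L_lower (f0 s t))].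
  - replace (2 * exp (- 2 / s^2)) with (RInt (fun _ => exp (- 2 / s^2)) (-1) 1).
    + apply RInt_le; try lra.
      * apply ex_RInt_const.
      * apply (@ex_RInt_continuous R_CompleteNormedModule). intros; apply cont_f0.
      * intros x Hx. unfold f0. apply Glow; auto. apply t_ge1. lra.
    + rewrite RInt_const. unfold scal; simpl. unfold mult; simpl. ring.
  - apply cont_f0.
  - intros z. left. apply Gpos.
  - exists (A0 s t). exact H0.
Qed.

End Ints.

Section Stein.
Variables s t : R.
Hypothesis Hs : 0 < s.
Hypothesis Ht : T0 s <= t.

Definition dG v := - (ep t / s^2) * ((t-1) * (f1 s t v - f0 s t v) + ep t * fM s t v).
Definition dF1 v := ep t * f1 s t v - (ep t / s^2) * ((t-1) * (f2 s t v - f1 s t v) + ep t * fP s t v).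

Lemma Gf_eq v : exp (- ((t - 1) * (exp (/ sqrt t * v) + - (1) + - (/ sqrt t * v)) +
      / sqrt t * v * (/ sqrt t * v * 1) * / 2) * / (s * (s * 1))) = Gf s t v.
Proof. unfold Gf, phi, ep. f_equal; try field. Qed.

Lemma der_G v : is_derive (Gf s t) v (dG v).
Proof.
  assert (T := sq_pos s t Hs Ht). assert (T2 := s2_pos s Hs).
  change (is_derive (fun v => exp (- phi t v / s^2)) v (dG v)).
  unfold dG, f1, f0, fM, phi, ep. auto_derive. lra.
  rewrite Gf_eq. field. lra.
Qed.

Lemma der_F1 v : is_derive (f1 s t) v (dF1 v).
Proof.
  assert (T := sq_pos s t Hs Ht). assert (T2 := s2_pos s Hs).
  change (is_derive (fun v => exp (ep t * v) * exp (- phi t v / s^2)) v (dF1 v)).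
  unfold dF1, f2, f1, fP, phi, ep.
  replace (exp (2 * (/ sqrt t * v))) with (exp (/ sqrt t * v) * exp (/ sqrt t * v)) by (rewrite <- exp_plus; f_equal; ring).
  auto_derive. lra.
  rewrite Gf_eq. field. lra.
Qed.

Lemma cont_dG v : continuous dG v.
Proof. assert (T := sq_pos s t Hs Ht). assert (T2 := s2_pos s Hs).
  apply contR. unfold dG, f1, f0, fM, Gf, phi, ep. auto_derive. repeat split; try apply I; lra. Qed.

Lemma cont_dF1 v : continuous dF1 v.
Proof. assert (T := sq_pos s t Hs Ht). assert (T2 := s2_pos s Hs).
  apply contR. unfold dF1, f2, f1, fP, Gf, phi, ep. auto_derive. repeat split; try apply I; lra. Qed.

Lemma S0 : (t - 1) * (A1 s t - A0 s t) + ep t * M1 s t = 0.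
Proof.
  assert (T := sq_pos s t Hs Ht). assert (T2 := s2_pos s Hs).
  assert (Hd : is_RInt_gen dG Fm Fp 0).
  { destruct (L_lim0 (Gf s t) (KK s) (bnd_f0 s t Hs Ht)) as [Lm Lp].
    apply (gderiv (Gf s t)); auto. apply der_G. apply cont_dG. }
  assert (Hl : is_RInt_gen dG Fm Fp (- (ep t / s^2) * ((t-1) * (A1 s t - A0 s t) + ep t * M1 s t))).
  { apply gscal. apply gplus. apply gscal. apply gminus. apply H1; auto. apply H0; auto.
    apply gscal. apply HM; auto. }
  assert (E := guniq _ _ _ Hd Hl).
  assert (0 < ep t) by (apply ep_facts; apply t_ge1 with s; auto).
  assert (0 < ep t / s^2) by (apply Rdiv_lt_0_compat; auto).
  nra.
Qed.

Lemma S1 : s^2 * A1 s t = (t - 1) * (A2 s t - A1 s t) + ep t * PP s t.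
Proof.
  assert (T := sq_pos s t Hs Ht). assert (T2 := s2_pos s Hs).
  assert (Hd : is_RInt_gen dF1 Fm Fp 0).
  { destruct (L_lim0 (f1 s t) (KK s) (bnd_f1 s t Hs Ht)) as [Lm Lp].
    apply (gderiv (f1 s t)); auto. apply der_F1. apply cont_dF1. }
  assert (Hl : is_RInt_gen dF1 Fm Fp (ep t * A1 s t - (ep t / s^2) * ((t-1) * (A2 s t - A1 s t) + ep t * PP s t))).
  { apply gminus. apply gscal. apply H1; auto. apply gscal. apply gplus. apply gscal. apply gminus. apply H2; auto. apply H1; auto.
    apply gscal. apply HP; auto. }
  assert (E := guniq _ _ _ Hd Hl).
  assert (0 < ep t) by (apply ep_facts; apply t_ge1 with s; auto).
  assert (E2 : ep t * (s^2 * A1 s t - ((t - 1) * (A2 s t - A1 s t) + ep t * PP s t)) = 0).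
  { replace 0 with (s^2 * 0) by ring. rewrite E. field. lra. }
  apply Rmult_integral in E2. destruct E2; lra.
Qed.

End Stein.

Lemma LP f g (a b : R) : is_lim f p_infty a -> is_lim g p_infty b -> is_lim (fun x => f x + g x) p_infty (a + b).
Proof. intros. apply (is_lim_plus f g p_infty a b); auto. reflexivity. Qed.
Lemma LS f g (a b : R) : is_lim f p_infty a -> is_lim g p_infty b -> is_lim (fun x => f x - g x) p_infty (a - b).
Proof. intros. apply (is_lim_minus f g p_infty a b); auto. reflexivity. Qed.
Lemma LM f g (a b : R) : is_lim f p_infty a -> is_lim g p_infty b -> is_lim (fun x => f x * g x) p_infty (a * b).
Proof. intros. apply (is_lim_mult f g p_infty a b); auto. exact I. Qed.
Lemma LD f g (a b : R) : b <> 0 -> is_lim f p_infty a -> is_lim g p_infty b -> is_lim (fun x => f x / g x) p_infty (a / b).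
Proof. intros. apply (is_lim_div f g p_infty a b); auto. intro E; injection E; auto. exact I. Qed.
Lemma LC (c : R) : is_lim (fun _ => c) p_infty c.
Proof. apply is_lim_const. Qed.
Lemma Lext f g (l : R) : (exists M, forall x, M < x -> f x = g x) -> is_lim f p_infty l -> is_lim g p_infty l.
Proof. intros [M HM] H. apply (is_lim_ext_loc f g); auto. exists M; auto. Qed.
Lemma Lsq f g h (l : R) : (exists M, forall x, M < x -> f x <= h x <= g x) ->
  is_lim f p_infty l -> is_lim g p_infty l -> is_lim h p_infty l.
Proof. intros [M HM] H1 H2. apply (is_lim_le_le_loc f g h p_infty l); auto. exists M; auto. Qed.

Lemma Linv_id : is_lim (fun t => / t) p_infty 0.
Proof. apply (is_lim_inv (fun t => t) p_infty p_infty). apply is_lim_id. discriminate. Qed.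
Lemma Linv_m1 : is_lim (fun t => / (t - 1)) p_infty 0.
Proof. apply (is_lim_inv (fun t => t - 1) p_infty p_infty).
  apply (is_lim_minus (fun t => t) (fun _ => 1) p_infty p_infty 1). apply is_lim_id. apply is_lim_const. reflexivity.
  discriminate. Qed.
Lemma Lep : is_lim (fun t => ep t) p_infty 0.
Proof. unfold ep. apply (is_lim_inv (fun t => sqrt t) p_infty p_infty).
  apply (is_lim_sqrt_p (fun t => t)). apply is_lim_id. discriminate. Qed.

Lemma Lexp (g : R -> R) : is_lim g p_infty 0 -> is_lim (fun t => exp (g t)) p_infty 1.
Proof.
  intros H. replace (Finite 1) with (Finite (exp 0)) by (rewrite exp_0; reflexivity).
  unfold is_lim in *. apply (filterlim_comp R R R g exp _ (locally 0)); auto.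
  apply (continuity_pt_filterlim exp 0). apply cont_of_der. auto_derive; auto.
Qed.

Section Lims.
Variable s : R.
Hypothesis Hs : 0 < s.

Definition c0 := 2 * exp (- 2 / s^2).
Definition BB := KK s * C0 / c0.
Definition mm t := A1 s t / A0 s t.
Definition qq t := ep t * (PP s t - mm t * M1 s t) / (s^2 * A0 s t).
Definition Vt t := A2 s t / A0 s t - mm t ^ 2.
Definition gg t := (s^2 / t) / (exp (s^2 / t) * (exp (s^2 / t) - 1)).
Definition R1 t := mm t / exp ((s^2 / t) / 2).
Definition R2 t := Vt t / (exp (s^2 / t) * (exp (s^2 / t) - 1)).

Lemma c0_pos : 0 < c0.
Proof. unfold c0. assert (T := exp_pos (-2/s^2)). lra. Qed.

Lemma facts t : T0 s <= t -> 2 <= t /\ s^2 <= t /\ 0 < ep t <= 1 /\ c0 <= A0 s t /\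
  Rabs (M1 s t) <= KK s * C0 /\ Rabs (PP s t) <= KK s * C0.
Proof.
  intros Ht. destruct (T0_facts s t Hs Ht) as [? [? ?]].
  split; auto. split; auto. split. apply ep_facts; lra.
  split. apply A0_low; auto. split. apply M1_bnd; auto. apply PP_bnd; auto.
Qed.

Lemma BB_pos : 0 <= BB.
Proof. unfold BB. destruct (facts (T0 s) (Rle_refl _)) as [_ [_ [_ [_ [H _]]]]].
  assert (T := Rabs_pos (M1 s (T0 s))). assert (T2 := c0_pos). apply Rmult_le_pos. lra.
  left; apply Rinv_0_lt_compat; auto. Qed.

Lemma m_eq t : T0 s <= t -> mm t = 1 - ep t * M1 s t / ((t - 1) * A0 s t).
Proof.
  intros Ht. destruct (facts t Ht) as [H2 [_ [He [HA _]]]]. assert (T := c0_pos).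
  assert (E := S0 s t Hs Ht). unfold mm. field_simplify_eq; try lra.
Qed.

Lemma m_bnd t : T0 s <= t -> Rabs (ep t * M1 s t / ((t - 1) * A0 s t)) <= BB / (t - 1).
Proof.
  intros Ht. destruct (facts t Ht) as [H2 [_ [He [HA [HM _]]]]]. assert (T := c0_pos).
  unfold Rdiv. rewrite !Rabs_mult, Rabs_right by lra.
  rewrite Rabs_inv, Rabs_mult, (Rabs_right (t-1)), (Rabs_right (A0 s t)) by lra.
  unfold BB. rewrite Rinv_mult.
  assert (0 < / (t-1)) by (apply Rinv_0_lt_compat; lra).
  assert (/ A0 s t <= / c0) by (apply Rinv_le_contravar; lra).
  assert (0 < / A0 s t) by (apply Rinv_0_lt_compat; lra).
  assert (T2 := Rabs_pos (M1 s t)).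
  assert (ep t * Rabs (M1 s t) <= KK s * C0) by nra.
  assert (ep t * Rabs (M1 s t) * / A0 s t <= KK s * C0 * / c0).
  { apply Rle_trans with (KK s * C0 * / A0 s t). apply Rmult_le_compat_r; lra.
    apply Rmult_le_compat_l; auto. lra. }
  nra.
Qed.

Lemma Lm : is_lim mm p_infty 1.
Proof.
  apply (Lsq (fun t => 1 - BB * / (t - 1)) (fun t => 1 + BB * / (t - 1))).
  - exists (T0 s). intros t Ht. rewrite m_eq by lra. assert (T := m_bnd t ltac:(lra)).
    unfold Rdiv in T. apply Rabs_le_between in T. lra.
  - replace (Finite 1) with (Finite (1 - BB * 0)) by (f_equal; ring). apply LS. apply LC. apply LM. apply LC. apply Linv_m1.
  - replace (Finite 1) with (Finite (1 + BB * 0)) by (f_equal; ring). apply LP. apply LC. apply LM. apply LC. apply Linv_m1.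
Qed.

Lemma V_eq t : T0 s <= t -> Vt t = s^2 * (mm t - qq t) / (t - 1).
Proof.
  intros Ht. destruct (facts t Ht) as [H2 [_ [He [HA _]]]]. assert (T := c0_pos).
  assert (E0 := S0 s t Hs Ht). assert (E1 := S1 s t Hs Ht). assert (T3 := s2_pos s Hs).
  assert (HA2 : A2 s t = A1 s t + (s^2 * A1 s t - ep t * PP s t) / (t - 1)) by (field_simplify_eq; lra).
  assert (HA1 : A1 s t = A0 s t - ep t * M1 s t / (t - 1)) by (field_simplify_eq; lra).
  unfold Vt, qq, mm. rewrite HA2. rewrite HA1. field. lra.
Qed.

Definition DD := KK s * C0 * (2 + BB) / (s^2 * c0).

Lemma m_abs t : T0 s <= t -> Rabs (mm t) <= 1 + BB.
Proof.
  intros Ht. destruct (facts t Ht) as [H2 _]. rewrite m_eq by auto.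
  assert (T := m_bnd t Ht). assert (T2 := BB_pos).
  assert (BB / (t - 1) <= BB). { unfold Rdiv. assert (/ (t-1) <= 1) by (rewrite <- Rinv_1; apply Rinv_le_contravar; lra). nra. }
  eapply Rle_trans. apply Rabs_triang. rewrite Rabs_Ropp, Rabs_R1. lra.
Qed.

Lemma q_bnd t : T0 s <= t -> Rabs (qq t) <= ep t * DD.
Proof.
  intros Ht. destruct (facts t Ht) as [H2 [_ [He [HA [HM HP]]]]]. assert (T := c0_pos). assert (T3 := s2_pos s Hs).
  assert (Hm := m_abs t Ht). assert (T4 := BB_pos).
  unfold qq, DD. unfold Rdiv. rewrite !Rabs_mult, Rabs_inv, Rabs_mult, (Rabs_right (ep t)), (Rabs_right (s^2)), (Rabs_right (A0 s t)) by lra.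
  assert (Hn : Rabs (PP s t - mm t * M1 s t) <= KK s * C0 * (2 + BB)).
  { eapply Rle_trans. apply Rabs_triang. rewrite Rabs_Ropp, Rabs_mult.
    assert (T5 := Rabs_pos (mm t)). assert (T6 := Rabs_pos (M1 s t)). assert (0 <= KK s * C0) by (assert (T7 := Rabs_pos (PP s t)); lra).
    assert (Rabs (mm t) * Rabs (M1 s t) <= (1 + BB) * (KK s * C0)) by (apply Rmult_le_compat; lra). nra. }
  rewrite Rinv_mult. rewrite Rinv_mult.
  assert (/ A0 s t <= / c0) by (apply Rinv_le_contravar; lra).
  assert (0 < / A0 s t) by (apply Rinv_0_lt_compat; lra).
  assert (0 < / s^2) by (apply Rinv_0_lt_compat; lra).
  assert (T8 := Rabs_pos (PP s t - mm t * M1 s t)).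
  assert (Rabs (PP s t - mm t * M1 s t) * (/ s^2 * / A0 s t) <= KK s * C0 * (2 + BB) * (/ s^2 * / c0)).
  { apply Rmult_le_compat; try lra. apply Rmult_le_pos; lra. apply Rmult_le_compat_l; lra. }
  nra.
Qed.

Lemma Lq : is_lim qq p_infty 0.
Proof.
  apply (Lsq (fun t => - (ep t * DD)) (fun t => ep t * DD)).
  - exists (T0 s). intros t Ht. assert (T := q_bnd t ltac:(lra)). apply Rabs_le_between in T. lra.
  - replace (Finite 0) with (Finite (- (0 * DD))) by (f_equal; ring).
    apply (is_lim_opp (fun t => ep t * DD) p_infty (0 * DD)). apply LM. apply Lep. apply LC.
  - replace (Finite 0) with (Finite (0 * DD)) by (f_equal; ring). apply LM. apply Lep. apply LC.
Qed.

Lemma Ly : is_lim (fun t => s^2 / t) p_infty 0.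
Proof. replace (Finite 0) with (Finite (s^2 * 0)) by (f_equal; ring). apply LM. apply LC. apply Linv_id. Qed.

Lemma Lg : is_lim gg p_infty 1.
Proof.
  apply (Lsq (fun t => / ((1 + s^2/t + 2 * (s^2/t)^2) * (1 + 2 * (s^2/t)))) (fun _ => 1)).
  - exists (T0 s). intros t Ht. destruct (facts t ltac:(lra)) as [H2 [Hst _]].
    assert (T3 := s2_pos s Hs).
    set (y := s^2 / t). assert (Hy : 0 < y <= 1).
    { unfold y. split. apply Rdiv_lt_0_compat; lra. apply Rmult_le_reg_r with t; [lra|].
      unfold Rdiv. rewrite Rmult_assoc, Rinv_l by lra. lra. }
    assert (E1 := exp_ineq1_le y). assert (E2 := E_up y ltac:(lra)).
    unfold gg. fold y.
    assert (0 < exp y - 1) by lra.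
    split.
    + assert (HB : exp y * (exp y - 1) <= (1 + y + 2 * y ^ 2) * (y * (1 + 2 * y))) by (apply Rmult_le_compat; nra).
      replace (y / (exp y * (exp y - 1))) with (/ (exp y * (exp y - 1) / y)) by (field; split; lra).
      apply Rinv_le_contravar.
      * apply Rdiv_lt_0_compat; nra.
      * unfold Rdiv. apply Rmult_le_reg_r with y; [lra|]. rewrite Rmult_assoc, Rinv_l by lra. nra.
    + unfold Rdiv. apply Rmult_le_reg_r with (exp y * (exp y - 1)). nra.
      rewrite Rmult_assoc, Rinv_l by nra. nra.
  - replace (Finite 1) with (Finite (/ ((1 + 0 + 2 * 0^2) * (1 + 2 * 0)))) by (f_equal; field).
    apply (is_lim_inv (fun t => (1 + s ^ 2 / t + 2 * (s ^ 2 / t) ^ 2) * (1 + 2 * (s ^ 2 / t))) p_infty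
      ((1 + 0 + 2 * 0 ^ 2) * (1 + 2 * 0))).
    + apply LM. apply LP. apply LP. apply LC. apply Ly.
      apply LM. apply LC. apply (Lext (fun t => s^2/t * (s^2/t))). exists 0; intros; ring.
      replace (Finite (0^2)) with (Finite (0*0)) by (f_equal; ring). apply LM; apply Ly.
      apply LP. apply LC. apply LM. apply LC. apply Ly.
    + intro E. injection E. lra.
  - apply LC.
Qed.

Lemma Ltt : is_lim (fun t => t / (t - 1)) p_infty 1.
Proof.
  apply (Lext (fun t => 1 + / (t - 1))).
  - exists 1. intros x Hx. field. lra.
  - replace (Finite 1) with (Finite (1 + 0)) by (f_equal; ring). apply LP. apply LC. apply Linv_m1.
Qed.

Lemma LR1 : is_lim R1 p_infty 1.
Proof.
  unfold R1. replace (Finite 1) with (Finite (1 / 1)) by (f_equal; field).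
  apply LD. lra. apply Lm. apply Lexp.
  replace (Finite 0) with (Finite (0 / 2)) by (f_equal; field).
  apply LD. lra. apply Ly. apply LC.
Qed.

Lemma LR2 : is_lim R2 p_infty 1.
Proof.
  apply (Lext (fun t => (mm t - qq t) * (t / (t - 1)) * gg t)).
  - exists (T0 s). intros t Ht. destruct (facts t ltac:(lra)) as [H2 [Hst _]].
    assert (T3 := s2_pos s Hs).
    unfold R2. rewrite V_eq by lra. unfold gg.
    assert (0 < s^2/t) by (apply Rdiv_lt_0_compat; lra).
    assert (E1 := exp_ineq1 (s^2/t) ltac:(lra)).
    field. repeat split; lra.
  - replace (Finite 1) with (Finite ((1 - 0) * 1 * 1)) by (f_equal; ring).
    apply LM. apply LM. apply LS. apply Lm. apply Lq. apply Ltt. apply Lg.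
Qed.

End Lims.

Lemma LW_spec a : 0 < a -> 0 < LambertW a /\ LambertW a * exp (LambertW a) = a.
Proof.
  intros Ha. unfold LambertW. apply epsilon_spec.
  destruct (IVT_gen (fun w => w * exp w) 0 a a) as [x [Hx E]].
  - intros x. apply cont_of_der. auto_derive; auto.
  - rewrite Rmult_0_l. assert (1 <= exp a) by (rewrite <- exp_0; apply exp_mono; lra).
    unfold Rmin, Rmax. destruct (Rle_dec 0 (a * exp a)); nra.
  - exists x. unfold Rmin, Rmax in Hx. destruct (Rle_dec 0 a); [|lra].
    split; auto. destruct (Req_dec x 0) as [Z|Z]; [rewrite Z, Rmult_0_l in E; lra|lra].
Qed.

Lemma LW_ge a : 0 < a -> ln a <= 2 * LambertW a.
Proof.
  intros Ha. destruct (LW_spec a Ha) as [Hp E]. set (w := LambertW a) in *.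
  assert (a <= exp (2 * w)).
  { rewrite <- E. replace (2 * w) with (w + w) by ring. rewrite exp_plus.
    apply Rmult_le_compat_r. left; apply exp_pos. apply le_exp. }
  rewrite <- (ln_exp (2 * w)). destruct (Req_dec a (exp (2 * w))) as [Z|Z].
  rewrite <- Z; lra. left; apply ln_increasing; lra.
Qed.

Section Sub.
Variables sg th : R.
Hypothesis Hs : 0 < sg.
Hypothesis Hth : 0 < th.
Definition ww := LambertW (th * sg^2).
Definition tt := 1 + ww.
Definition CC := ep tt / (sg * sqrt (2 * PI)) * exp (- (ww + ww^2/2) / sg^2).

Lemma ww_spec : 0 < ww /\ ww * exp ww = th * sg^2.
Proof. apply LW_spec. apply Rmult_lt_0_compat; auto. apply pow_lt; auto. Qed.

Lemma sqrt2pi : 0 < sqrt (2 * PI).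
Proof. apply sqrt_lt_R0. assert (T := PI_RGT_0). lra. Qed.

Lemma KEY v : ep tt * exp (ep tt * v + - ww) * (exp (- th * exp (ep tt * v + - ww)) * lognormal_pdf sg (exp (ep tt * v + - ww)))
   = CC * Gf sg tt v.
Proof.
  destruct ww_spec as [Hw Ew]. assert (T := sqrt2pi). assert (T2 : 0 < sg^2) by (apply pow_lt; auto).
  assert (Hx : th * exp (ep tt * v + - ww) = ww * exp (ep tt * v) / sg^2).
  { rewrite exp_plus, exp_Ropp. assert (T3 := exp_pos ww).
    apply Rmult_eq_reg_r with (sg^2 * exp ww); [|nra].
    field_simplify; [|lra|lra]. replace (th * exp (ep tt * v) * sg ^ 2) with (exp (ep tt * v) * (th * sg^2)) by ring. rewrite <- Ew. ring. }
  unfold lognormal_pdf, CC, Gf. rewrite ln_exp.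
  set (X := exp (ep tt * v + - ww)). assert (HX : 0 < X) by apply exp_pos.
  replace (- th * X) with (- (ww * exp (ep tt * v) / sg^2)) by (unfold X; rewrite <- Hx; ring).
  transitivity (ep tt / (sg * sqrt (2 * PI)) * (exp (- (ww * exp (ep tt * v) / sg ^ 2)) * exp (- (ep tt * v + - ww) ^ 2 / (2 * sg ^ 2)))).
  { field. repeat split; lra. }
  rewrite Rmult_assoc. f_equal. rewrite <- !exp_plus. f_equal. unfold phi, tt. field. lra.
Qed.

Lemma tt_ge1 : 1 <= tt.
Proof. unfold tt. destruct ww_spec. lra. Qed.

Lemma cont_pdf x : 0 < x -> continuous (fun x => exp (- th * x) * lognormal_pdf sg x) x.
Proof.
  intros Hx. assert (T := sqrt2pi). apply contR. unfold lognormal_pdf. auto_derive.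
  assert (0 < sg^2) by (apply pow_lt; auto).
  repeat split; auto; try (apply Rgt_not_eq; repeat apply Rmult_lt_0_compat; auto); simpl in *; lra.
Qed.

Lemma Lgen (h H : R -> R) L : (forall x, 0 < x -> continuous h x) ->
  (forall v, h (exp (ep tt * v + - ww)) = H v) ->
  is_RInt_gen (fun v => H v * Gf sg tt v) Fm Fp L ->
  is_RInt_gen (fun x => h x * (exp (- th * x) * lognormal_pdf sg x)) (at_right 0) Fp (CC * L).
Proof.
  intros Hc Hh HL. apply (L_subst _ (ep tt) (- ww)).
  - apply ep_facts, tt_ge1.
  - intros x Hx. apply (continuous_mult h (fun x => exp (- th * x) * lognormal_pdf sg x) x); auto.
    apply cont_pdf; auto.
  - apply (gext (fun v => CC * (H v * Gf sg tt v))); [|apply gscal; auto].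
    intros v. set (X := exp (ep tt * v + - ww)).
    transitivity (H v * (ep tt * X * (exp (- th * X) * lognormal_pdf sg X))).
    + unfold X. rewrite KEY. ring.
    + rewrite <- Hh. fold X. ring.
Qed.

Lemma int0_val F l : is_RInt_gen F (at_right 0) Fp l -> int0inf F = l.
Proof. unfold int0inf. intros H. apply (@is_RInt_gen_unique R_CompleteNormedModule); try typeclasses eauto; auto. Qed.

Lemma gext0 (f g : R -> R) l : (forall x, f x = g x) -> is_RInt_gen f (at_right 0) Fp l -> is_RInt_gen g (at_right 0) Fp l.
Proof. apply gext_any; typeclasses eauto. Qed.

Hypothesis Ht : T0 sg <= tt.

Lemma CC_pos : 0 < CC.
Proof. unfold CC. assert (T := sqrt2pi). assert (T2 := ep_facts tt tt_ge1).
  apply Rmult_lt_0_compat; [|apply exp_pos]. apply Rdiv_lt_0_compat; [lra|]. apply Rmult_lt_0_compat; auto. Qed.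

Lemma A0_pos : 0 < A0 sg tt.
Proof. assert (T := A0_low sg tt Hs Ht). assert (T2 := exp_pos (-2/sg^2)). lra. Qed.

Lemma laplace_val : laplace sg th = CC * A0 sg tt.
Proof.
  unfold laplace. apply int0_val.
  apply (gext0 (fun x => 1 * (exp (- th * x) * lognormal_pdf sg x))); [intros; ring|].
  apply (Lgen (fun _ => 1) (fun _ => 1)).
  - intros; apply continuous_const.
  - reflexivity.
  - apply (gext (f0 sg tt)); [intros; unfold f0; ring|]. apply H0; auto.
Qed.

Lemma expk : exp (- kappa sg th) = / (CC * A0 sg tt).
Proof. unfold kappa. rewrite laplace_val, exp_Ropp, exp_ln; auto.
  apply Rmult_lt_0_compat. apply CC_pos. apply A0_pos. Qed.

Lemma mean_val : tilted_mean sg th = exp (- ww) * (A1 sg tt / A0 sg tt).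
Proof.
  unfold tilted_mean. apply int0_val.
  apply (gext0 (fun x => (x * exp (- kappa sg th)) * (exp (- th * x) * lognormal_pdf sg x))).
  { intros x. unfold tilted_pdf. unfold Rminus. rewrite exp_plus. ring. }
  replace (exp (- ww) * (A1 sg tt / A0 sg tt)) with (CC * (exp (- ww) * exp (- kappa sg th) * A1 sg tt)).
  2:{ rewrite expk. assert (T := CC_pos). assert (T2 := A0_pos). field. lra. }
  apply (Lgen _ (fun v => exp (ep tt * v + - ww) * exp (- kappa sg th))).
  - intros x Hx. apply contR. auto_derive. auto.
  - reflexivity.
  - apply (gext (fun v => exp (- ww) * exp (- kappa sg th) * f1 sg tt v)).
    + intros v. unfold f1. rewrite exp_plus. ring.
    + apply gscal. apply H1; auto.
Qed.

Lemma var_val : tilted_var sg th = exp (- ww) ^ 2 * (A2 sg tt / A0 sg tt - (A1 sg tt / A0 sg tt) ^ 2).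
Proof.
  unfold tilted_var. set (m := tilted_mean sg th). apply int0_val.
  apply (gext0 (fun x => ((x - m)^2 * exp (- kappa sg th)) * (exp (- th * x) * lognormal_pdf sg x))).
  { intros x. unfold tilted_pdf. replace (- th * x - kappa sg th) with (- th * x + - kappa sg th) by ring. rewrite exp_plus. ring. }
  set (L := exp (- kappa sg th) * (exp (- ww) ^ 2 * A2 sg tt - 2 * m * exp (- ww) * A1 sg tt + m^2 * A0 sg tt)).
  replace (exp (- ww) ^ 2 * (A2 sg tt / A0 sg tt - (A1 sg tt / A0 sg tt) ^ 2)) with (CC * L).
  2:{ unfold L, m. rewrite mean_val, expk. assert (T := CC_pos). assert (T2 := A0_pos). field. lra. }
  apply (Lgen _ (fun v => (exp (ep tt * v + - ww) - m)^2 * exp (- kappa sg th))).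
  - intros x Hx. apply contR. auto_derive. auto.
  - reflexivity.
  - apply (gext (fun v => exp (- kappa sg th) * (exp (- ww) ^ 2 * f2 sg tt v - 2 * m * exp (- ww) * f1 sg tt v + m^2 * f0 sg tt v))).
    + intros v. unfold f2, f1, f0. rewrite exp_plus.
      replace (exp (2 * (ep tt * v))) with (exp (ep tt * v) * exp (ep tt * v)) by (rewrite <- exp_plus; f_equal; ring).
      ring.
    + apply gscal. apply gplus. apply gminus. apply gscal. apply H2; auto.
      apply gscal. apply H1; auto. apply gscal. apply H0; auto.
Qed.

End Sub.

Lemma big_th sg M : 0 < sg -> exists N, forall th, N < th -> 0 < th /\ M < tt sg th.
Proof.
  intros Hs. assert (T := pow_lt sg 2 Hs).
  exists (exp (2 * Rabs M) / sg^2). intros th Hth.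
  assert (P := exp_pos (2 * Rabs M)).
  assert (H0 : 0 < exp (2 * Rabs M) / sg ^ 2) by (apply Rdiv_lt_0_compat; auto).
  assert (Hth0 : 0 < th) by lra.
  assert (Ha : exp (2 * Rabs M) < th * sg^2).
  { apply Rmult_lt_reg_r with (/ sg^2). apply Rinv_0_lt_compat; auto.
    rewrite Rmult_assoc, Rinv_r by lra. rewrite Rmult_1_r. auto. }
  split; auto.
  assert (Hl := LW_ge (th * sg^2) ltac:(nra)).
  assert (2 * Rabs M < ln (th * sg^2)) by (rewrite <- (ln_exp (2 * Rabs M)); apply ln_increasing; auto).
  unfold tt, ww. assert (T2 := Rle_abs M). lra.
Qed.

Lemma Ltt_lim sg : 0 < sg -> is_lim (fun th => tt sg th) p_infty p_infty.
Proof.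
  intros Hs P [M HM]. destruct (big_th sg M Hs) as [N HN]. exists N. intros th Hth. apply HM. apply HN; auto.
Qed.

Theorem corollary2p2 (sigma : R) (hsigma : 0 < sigma) :
  is_lim (fun theta => tilted_mean sigma theta /
            exp (mu_theta sigma theta + sigma2_theta sigma theta / 2))
         p_infty 1
  /\
  is_lim (fun theta => tilted_var sigma theta /
            (exp (2 * mu_theta sigma theta + sigma2_theta sigma theta)
             * (exp (sigma2_theta sigma theta) - 1)))
         p_infty 1.
Proof.
  destruct (big_th sigma (T0 sigma) hsigma) as [N HN].
  assert (Hc : Rbar_locally' p_infty (fun th => Finite (tt sigma th) <> p_infty)).
  { exists 0. intros; discriminate. }
  split.
  - apply (Lext (fun th => R1 sigma (tt sigma th))).
    + exists N. intros th Hth. destruct (HN th Hth) as [Hth0 Ht].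
      rewrite mean_val by (auto; lra). unfold R1, mm, mu_theta, sigma2_theta.
      fold (ww sigma th). fold (tt sigma th).
      assert (HA : 0 < A0 sigma (tt sigma th)) by (eapply A0_pos; eauto; lra).
      assert (X1 := exp_pos (sigma ^ 2 / tt sigma th / 2)). assert (X2 := exp_pos (- ww sigma th)).
      rewrite exp_plus. field. repeat split; lra.
    + apply (is_lim_comp (R1 sigma) (tt sigma) p_infty 1 p_infty).
      apply LR1; auto. apply Ltt_lim; auto. exact Hc.
  - apply (Lext (fun th => R2 sigma (tt sigma th))).
    + exists N. intros th Hth. destruct (HN th Hth) as [Hth0 Ht].
      rewrite var_val by (auto; lra). unfold R2, Vt, mm, mu_theta, sigma2_theta.
      fold (ww sigma th). fold (tt sigma th).
      destruct (T0_facts sigma (tt sigma th) hsigma ltac:(lra)) as [Htt _].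
      assert (Hp : 0 < sigma ^ 2 / tt sigma th).
      { apply Rdiv_lt_0_compat. apply pow_lt; auto. lra. }
      assert (E1 := exp_ineq1 _ (Rgt_not_eq _ _ Hp)).
      rewrite exp_plus. replace (2 * - ww sigma th) with (- ww sigma th + - ww sigma th) by ring.
      assert (HA : 0 < A0 sigma (tt sigma th)) by (eapply A0_pos; eauto; lra).
      assert (X2 := exp_pos (- ww sigma th)).
      rewrite exp_plus. field. repeat split; lra.
    + apply (is_lim_comp (R2 sigma) (tt sigma) p_infty 1 p_infty).
      apply LR2; auto. apply Ltt_lim; auto. exact Hc.
Qed.
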